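(* Let $\mathbb{k}$ be a field of characteristic $0$ containing a primitive $n$-th root of unity $\omega$, let $H=T_{n^2}(\omega)$ be the Taft Hopf algebra, let $A=\mathbb{k}[z]/(z^n-\omega)$ with $u$ the image of $z$, let $a_i=(\omega-1)^i\omega^{i(i+1)/2}$, and let $$\rho(u)=\sum_{i=0}^{n-1}a_i\,x^ig^{-(i+1)}\otimes u^{i+1}\in H\otimes A .$$ Then for every $1\le s\le n$, in the algebra $H\otimes A$, $$\rho(u)^s=\sum_{k=0}^{n-1}a_k\Big(\sum_{\{0\le i_1,\dots,i_s\le k\ \mid\ \sum_{j=1}^s i_j=k\}}\omega^{\sum_{j=2}^s i_j(j-1)}\Big)\,x^kg^{-(k+s)}\otimes u^{k+s}.$$
   Context: The Taft Hopf algebra is $H=T_{n^2}(\omega)=\mathbb{k}\langle x,g\mid x^n=0,\ g^n=1,\ xg=\omega gx\rangle$ with $\Delta(g)=g\otimes g$, $\Delta(x)=x\otimes 1+g\otimes x$, $\epsilon(g)=1$, $\epsilon(x)=0$. $H\otimes A$ carries the tensor product algebra structure. *)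

(* Defs.v *)
From mathcomp Require Import all_boot all_order all_algebra.
Set Implicit Arguments. Unset Strict Implicit. Unset Printing Implicit Defensive.
Import Order.TTheory GRing.Theory Num.Theory.
Local Open Scope ring_scope.

(* The algebra H (x) A, H = T_{n^2}(w) the Taft algebra, A = k[z]/(z^n - w),
   realised on its PBW basis  x^i g^j (x) u^m  (0 <= i,j,m < n).  Product of basis elements (tensor product algebra):
     (x^i g^j (x) u^m)(x^k g^l (x) u^r)
       = w^(-jk) x^(i+k) g^(j+l mod n) (x) u^(m+r)
   with x^(i+k) = 0 if i+k >= n, and u^(m+r) = w u^(m+r-n) if m+r >= n.
   (Uses g x = w^-1 x g, g^n = 1, x^n = 0, u^n = w.) *)
Notation HA F n := {ffun 'I_n * 'I_n * 'I_n -> (F%type)^o}.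

Section TaftTensor.
Variables (F : fieldType) (n : nat) (w : F).


Definition HAmul (p q : HA F n) : HA F n :=
  [ffun t : 'I_n * 'I_n * 'I_n =>
    \sum_(a : 'I_n * 'I_n * 'I_n) \sum_(b : 'I_n * 'I_n * 'I_n)
      if [&& (a.1.1 + b.1.1 == t.1.1)%N,
             ((a.1.2 + b.1.2) %% n == t.1.2)%N &
             ((a.2 + b.2) %% n == t.2)%N]
      then p a * q b * (w^-1) ^+ (a.1.2 * b.1.1)
             * (if (n <= a.2 + b.2)%N then w else 1)
      else 0].

Definition HAbasis (i j m : nat) : HA F n :=
  [ffun t : 'I_n * 'I_n * 'I_n =>
    if [&& (t.1.1 == i :> nat), (t.1.2 == j :> nat) & (t.2 == m :> nat)]
    then 1 else 0].

Definition HAone : HA F n := HAbasis 0 0 0.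
Definition HAx : HA F n := HAbasis 1 0 0.
Definition HAg : HA F n := HAbasis 0 1 0.
Definition HAginv : HA F n := HAbasis 0 n.-1 0.  (* g^-1 = g^(n-1) (x) 1 *)
Definition HAu : HA F n := HAbasis 0 0 1.

Definition HApow (p : HA F n) (s : nat) : HA F n := iter s (HAmul p) HAone.

End TaftTensor.

Definition taft_a (F : fieldType) (w : F) (i : nat) : F :=
  (w - 1) ^+ i * w ^+ ((i * i.+1)./2).

Definition taft_rho (F : fieldType) (n : nat) (w : F) : HA F n :=
  \sum_(i < n) taft_a w i *:
     HAmul w (HAmul w (HApow w (HAx F n) i) (HApow w (HAginv F n) i.+1))
             (HApow w (HAu F n) i.+1).

(* Main.v *)
Require Import Defs.
From mathcomp Require Import all_boot all_order all_algebra.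
From mathcomp Require Import ring zify.
Import GRing.Theory.
Set Implicit Arguments. Unset Strict Implicit.
Local Open Scope ring_scope.

Section S.
Variables (F : fieldType) (n : nat) (w : F).

Lemma basisE i j m (Hi : (i < n)%N) (Hj : (j < n)%N) (Hm : (m < n)%N) :
  HAbasis F n i j m = [ffun t => if t == ((Ordinal Hi, Ordinal Hj), Ordinal Hm) then 1 else 0].
Proof.
apply/ffunP => -[[a1 a2] a3]; rewrite !ffunE /= !xpair_eqE.
have E : forall (x : 'I_n) y (H : (y<n)%N), (x == Ordinal H) = (val x == y) by [].
by rewrite !E andbA.
Qed.

Lemma HAmul_basis i j m k l r (Hi : (i < n)%N) (Hj : (j < n)%N) (Hm : (m < n)%N)
  (Hk : (k < n)%N) (Hl : (l < n)%N) (Hr : (r < n)%N) :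
 HAmul w (HAbasis F n i j m) (HAbasis F n k l r) =
  [ffun t : 'I_n * 'I_n * 'I_n => if [&& (i+k == t.1.1)%N, ((j+l)%%n == t.1.2)%N & ((m+r)%%n == t.2)%N]
   then (w^-1)^+(j*k) * (if (n <= m+r)%N then w else 1) else 0].
Proof.
rewrite (basisE Hi Hj Hm) (basisE Hk Hl Hr).
apply/ffunP => t; rewrite !ffunE.
rewrite (bigD1 ((Ordinal Hi, Ordinal Hj), Ordinal Hm)) //= [X in _ + X]big1 => [|a aA]; last first.
  by apply: big1 => b _; rewrite ffunE (negbTE aA) !mul0r; case: ifP.
rewrite addr0 (bigD1 ((Ordinal Hk, Ordinal Hl), Ordinal Hr)) //= [X in _ + X]big1 => [|b bB]; last first.
  by rewrite !ffunE eqxx (negbTE bB) !mulr0 !mul0r; case: ifP.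
rewrite !ffunE !eqxx !addr0 !mul1r.
by case: ifP.
Qed.

Lemma HAmulDl (p q r : HA F n) : HAmul w (p + q) r = HAmul w p r + HAmul w q r.
Proof.
apply/ffunP => t; rewrite !ffunE -big_split; apply: eq_bigr => a _.
rewrite -big_split; apply: eq_bigr => b _; rewrite !ffunE.
by case: ifP => _ /=; rewrite ?addr0 // !(@mulrDl F).
Qed.
Lemma HAmulDr (p q r : HA F n) : HAmul w p (q + r) = HAmul w p q + HAmul w p r.
Proof.
apply/ffunP => t; rewrite !ffunE -big_split; apply: eq_bigr => a _.
rewrite -big_split; apply: eq_bigr => b _; rewrite !ffunE.
by case: ifP => _ /=; rewrite ?addr0 // (@mulrDr F) !(@mulrDl F).
Qed.

Lemma HAmulZl c (p q : HA F n) : HAmul w (c *: p) q = c *: HAmul w p q.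
Proof.
apply/ffunP => t; rewrite !ffunE scaler_sumr; apply: eq_bigr => a _.
rewrite scaler_sumr; apply: eq_bigr => b _; rewrite !ffunE.
by case: ifP => _; rewrite ?scaler0 // !scalerAl.
Qed.

Lemma HAmulZr c (p q : HA F n) : HAmul w p (c *: q) = c *: HAmul w p q.
Proof.
apply/ffunP => t; rewrite !ffunE scaler_sumr; apply: eq_bigr => a _.
rewrite scaler_sumr; apply: eq_bigr => b _; rewrite !ffunE.
case: ifP => _; rewrite ?scaler0 //. rewrite -[c *: q b]/(c * q b) -[c *: (_ : F^o)]/(c * _). by rewrite !(@mulrA F) ((@mulrC F) (p a)).
Qed.

Lemma HAmul0l (q : HA F n) : HAmul w 0 q = 0.
Proof. by have := HAmulZl 0 0 q; rewrite !scale0r. Qed.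
Lemma HAmul0r (q : HA F n) : HAmul w q 0 = 0.
Proof. by have := HAmulZr 0 q 0; rewrite !scale0r. Qed.

Lemma HAmul_suml I (rr : seq I) (P : pred I) (G : I -> HA F n) q :
  HAmul w (\sum_(i <- rr | P i) G i) q = \sum_(i <- rr | P i) HAmul w (G i) q.
Proof. by apply: (big_morph (fun p => HAmul w p q)) => [x y|]; rewrite ?HAmulDl ?HAmul0l. Qed.
Lemma HAmul_sumr I (rr : seq I) (P : pred I) (G : I -> HA F n) q :
  HAmul w q (\sum_(i <- rr | P i) G i) = \sum_(i <- rr | P i) HAmul w q (G i).
Proof. by apply: (big_morph (fun p => HAmul w q p)) => [x y|]; rewrite ?HAmulDr ?HAmul0r. Qed.

Definition E i j m : HA F n :=
  if (i < n)%N then w ^+ (m %/ n) *: HAbasis F n i (j %% n) (m %% n) else 0.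

Lemma E0 i j m : (n <= i)%N -> E i j m = 0.
Proof. by rewrite /E leqNgt => /negbTE ->. Qed.

Lemma HAmul_E (n_gt0 : (0 < n)%N) i j m k l r :
  HAmul w (E i j m) (E k l r) = (w^-1)^+((j %% n) * k) *: E (i+k) (j+l) (m+r).
Proof.
have [ni|iN] := leqP n i; first by rewrite E0 ?HAmul0l ?E0 ?scaler0 // (leq_trans ni) ?leq_addr.
have [nk|kN] := leqP n k; first by rewrite (@E0 k l r nk) ?HAmul0r ?E0 ?scaler0 // (leq_trans nk) ?leq_addl.
rewrite /E iN kN HAmulZl HAmulZr HAmul_basis ?ltn_pmod //.
have [ikN|nik] := ltnP (i + k) n.
  apply/ffunP => t; rewrite !ffunE !modnDm.
  rewrite (eq_sym (t.1.1 : nat)) (eq_sym (t.1.2 : nat)) (eq_sym (t.2 : nat)).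
  case: ifP => _; last by rewrite !scaler0.
  rewrite /GRing.scale /= divnD //.
  by case: leqP => _; rewrite !exprD /= ?expr1 ?expr0; ring.
apply/ffunP => t; rewrite !ffunE.
have /negbTE-> : (i + k)%N != t.1.1.
  by rewrite neq_ltn (leq_trans (ltn_ord t.1.1)) ?orbT.
by rewrite !scaler0.
Qed.

Fixpoint P (s k : nat) : F := match s with
  | 0 => (k == 0)%:R
  | s'.+1 => \sum_(i < k.+1) w ^+ (k - i)%N * P s' (k - i)%N end.

Definition join N s (a : 'I_N.+1) (g : {ffun 'I_s -> 'I_N.+1}) : {ffun 'I_s.+1 -> 'I_N.+1} :=
  [ffun j => if unlift ord0 j is Some j' then g j' else a].
Definition tl N s (f : {ffun 'I_s.+1 -> 'I_N.+1}) : {ffun 'I_s -> 'I_N.+1} :=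
  [ffun j => f (lift ord0 j)].

Lemma joinK N s (f : {ffun 'I_s.+1 -> 'I_N.+1}) : join (f ord0) (tl f) = f.
Proof. by apply/ffunP => j; rewrite !ffunE; case: (unliftP ord0 j) => [j'|] ->; rewrite ?ffunE. Qed.
Lemma tlK N s a (g : {ffun 'I_s -> 'I_N.+1}) : tl (join a g) = g.
Proof. by apply/ffunP => j; rewrite !ffunE liftK. Qed.
Lemma join0 N s a (g : {ffun 'I_s -> 'I_N.+1}) : join a g ord0 = a.
Proof. by rewrite ffunE unlift_none. Qed.
Lemma joinS N s a (g : {ffun 'I_s -> 'I_N.+1}) j : join a g (lift ord0 j) = g j.
Proof. by rewrite ffunE liftK. Qed.

Lemma Sf N s : forall k, (k <= N)%N ->
  \sum_(f : {ffun 'I_s -> 'I_N.+1} | (\sum_(j < s) (f j : nat) == k)%N)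
          w ^+ (\sum_(j < s) (f j : nat) * j)%N = P s k.
Proof.
elim: s => [|s IH] k kN.
  rewrite (eq_bigl (fun _ => k == 0)%N) => [|f]; last by rewrite big_ord0 eq_sym.
  case: (k =P 0)%N => [->|/eqP k0] /=.
    rewrite (eq_bigr (fun _ => 1)) => [|f _]; rewrite ?big_ord0 ?expr0 //.
    by rewrite sumr_const card_ffun !card_ord expn0.
  by rewrite (negbTE k0) big_pred0_eq.
rewrite (partition_big (fun f : {ffun 'I_s.+1 -> 'I_N.+1} => f ord0) predT) //=.
rewrite (eq_bigr (fun a : 'I_N.+1 => if (a <= k)%N then w ^+ (k - a)%N * P s (k - a)%N else 0)); last first.
  move=> a _.
  rewrite (reindex_onto (join a) (@tl N s)) => [|f /andP[_ /eqP <-]]; last by rewrite joinK.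
  rewrite (eq_bigl (fun g : {ffun 'I_s -> 'I_N.+1} => (\sum_(j < s) (g j : nat) == k - a)%N && (a <= k)%N)) => [|g]; last first.
    rewrite tlK eqxx andbT join0 eqxx andbT big_ord_recl join0.
    rewrite (eq_bigr (fun j => (g j : nat))) => [|j _]; last by rewrite joinS.
    by apply/eqP/andP => [<-|[/eqP-> ak]]; [rewrite addKn leq_addr | rewrite subnKC].
  case: leqP => ak; last by rewrite big_pred0 // => g; rewrite andbF.
  rewrite -(IH (k - a)%N) ?(leq_trans (leq_subr _ _)) // mulr_sumr.
  apply: eq_big => [g|g /andP[/eqP gs _]]; first by rewrite andbT.
  rewrite big_ord_recl join0 /= muln0 add0n -exprD; congr (w ^+ _).
  rewrite (eq_bigr (fun j : 'I_s => (g j : nat) * j + g j)%N) => [|j _]; last first.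
    by rewrite joinS /bump leq0n add1n mulnS addnC.
  by rewrite big_split /= gs addnC.
rewrite -big_mkcond /= (big_ord_widen_cond N.+1 xpredT (fun a => w ^+ (k - a)%N * P s (k - a)%N)) //.
Qed.
End S.

Lemma half_tri m : ((m * m.+1)./2 * 2 = m * m.+1)%N.
Proof. by rewrite muln2 -[RHS]odd_double_half oddM andbN add0n. Qed.

Lemma tri_add i k : ((i * i.+1)./2 + (k * k.+1)./2 + i * k = ((i + k) * (i + k).+1)./2)%N.
Proof.
apply/eqP; rewrite -(eqn_pmul2r (_ : 0 < 2)%N) // half_tri !mulnDl !half_tri.
apply/eqP; ring.
Qed.

Lemma taft_aD (F : fieldType) (w : F) i k :
  taft_a w i * taft_a w k * w ^+ (i * k) = taft_a w (i + k).
Proof.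
rewrite /taft_a -tri_add !exprD; ring.
Qed.

Lemma conv_sum (F : fieldType) (M : lmodType F) n (G : nat -> nat -> F) (V : nat -> M) :
  (forall K, (n <= K)%N -> V K = 0) ->
  \sum_(i < n) \sum_(k < n) G i k *: V (i + k)%N =
  \sum_(K < n) (\sum_(i < K.+1) G i (K - i)%N) *: V K.
Proof.
move=> V0.
have step : forall i, \sum_(k < n) G i k *: V (i + k)%N =
    \sum_(K < n) (if (i <= K)%N then G i (K - i)%N else 0) *: V K.
  move=> i; rewrite -(big_mkord xpredT (fun k => G i k *: V (i + k)%N)) -(big_mkord xpredT (fun K => (if (i <= K)%N then G i (K - i)%N else 0) *: V K)) /=.
  set H := fun K : nat => (if (i <= K)%N then G i (K - i)%N else 0) *: V K.
  have <- : \sum_(0 <= K < i + n) H K = \sum_(0 <= K < n) H K.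
    rewrite (big_cat_nat (leq0n n) (leq_addl i n)) /= [X in _ + X]big1_seq ?addr0 //.
    by move=> K /andP[_]; rewrite mem_index_iota => /andP[nK _]; rewrite /H (V0 _ nK) scaler0.
  rewrite [RHS](big_cat_nat (leq0n i) (leq_addr n i)) /= [X in _ = X + _]big1_seq ?add0r; last first.
    by move=> K /andP[_]; rewrite mem_index_iota => /andP[_]; rewrite /H ltnNge => /negbTE->; rewrite scale0r.
  rewrite (big_addn 0 (i + n) i) addKn; apply: eq_bigr => k _.
  by rewrite /H leq_addl addnK addnC.
rewrite (eq_bigr (fun i : 'I_n => \sum_(K < n) (if (i <= K)%N then G i (K - i)%N else 0) *: V K)) => [|i _]; last exact: step.
rewrite exchange_big /=.
apply: eq_bigr => K _; rewrite -scaler_suml; congr (_ *: _).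
rewrite (big_ord_widen_cond n xpredT (fun i => G i (K - i)%N)) //.
by rewrite [RHS]big_mkcond /=; apply: eq_bigr => i _; rewrite ltnS.
Qed.

Section Main.
Variables (F : fieldType) (n : nat) (w : F).
Hypothesis n_gt1 : (1 < n)%N.
Hypothesis wn : w ^+ n = 1.

Let n_gt0 : (0 < n)%N. Proof. exact: ltnW. Qed.

Lemma E_one : HAone F n = E n w 0 0 0.
Proof. by rewrite /E n_gt0 /HAone div0n mod0n expr0 scale1r. Qed.
Lemma E_x : HAx F n = E n w 1 0 0.
Proof. by rewrite /E n_gt1 /HAx div0n mod0n expr0 scale1r. Qed.
Lemma E_ginv : HAginv F n = E n w 0 n.-1 0.
Proof. by rewrite /E n_gt0 /HAginv div0n mod0n expr0 scale1r modn_small // ltn_predL. Qed.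
Lemma E_u : HAu F n = E n w 0 0 1.
Proof. by rewrite /E n_gt0 /HAu divn_small // mod0n expr0 scale1r modn_small. Qed.

Lemma powx i : HApow w (HAx F n) i = E n w i 0 0.
Proof.
elim: i => [|i IH]; first exact: E_one.
transitivity (HAmul w (HAx F n) (HApow w (HAx F n) i)); first by [].
by rewrite IH E_x HAmul_E // mod0n mul0n expr0 scale1r.
Qed.
Lemma powginv i : HApow w (HAginv F n) i = E n w 0 (n.-1 * i) 0.
Proof.
elim: i => [|i IH]; first by rewrite muln0; exact: E_one.
transitivity (HAmul w (HAginv F n) (HApow w (HAginv F n) i)); first by [].
by rewrite IH E_ginv HAmul_E // muln0 expr0 scale1r mulnS.
Qed.
Lemma powu i : HApow w (HAu F n) i = E n w 0 0 i.
Proof.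
elim: i => [|i IH]; first exact: E_one.
transitivity (HAmul w (HAu F n) (HApow w (HAu F n) i)); first by [].
by rewrite IH E_u HAmul_E // mod0n mul0n expr0 scale1r add1n.
Qed.
Lemma term k J M : HAmul w (HAmul w (E n w k 0 0) (E n w 0 J 0)) (E n w 0 0 M) = E n w k J M.
Proof. by rewrite HAmul_E // mod0n mul0n expr0 scale1r HAmul_E // muln0 expr0 scale1r !addn0 !add0n. Qed.

Lemma w0 : w != 0.
Proof. by apply: contra_eq_neq wn => ->; rewrite expr0n gtn_eqF // eq_sym oner_eq0. Qed.

Lemma factor x k : (w^-1) ^+ (((n.-1 * x) %% n) * k) = w ^+ (x * k).
Proof.
have wV : (w^-1) ^+ n.-1 = w.
  rewrite exprVn -[w in RHS]invrK; congr (_^-1); apply: (mulfI w0).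
  by rewrite mulfV ?w0 // -exprS prednK.
rewrite exprM expr_mod; last by rewrite exprVn wn invr1.
by rewrite exprM wV -exprM.
Qed.

Lemma rho_E : taft_rho n w = \sum_(i < n) taft_a w i *: E n w i (n.-1 * i.+1) i.+1.
Proof. by apply: eq_bigr => i _; rewrite powx powginv powu term. Qed.

Lemma rho_pow s : HApow w (taft_rho n w) s =
  \sum_(k < n) (taft_a w k * P w s k) *: E n w k (n.-1 * (k + s)) (k + s).
Proof.
elim: s => [|s IH].
  rewrite (bigD1 (Ordinal n_gt0)) //= big1 => [|k k0]; last first.
    have /negbTE-> : (k : nat) != 0%N by []. by rewrite /= mulr0 scale0r.
  by rewrite /taft_a !expr0 !mul1r scale1r addr0 muln0 E_one.
transitivity (HAmul w (taft_rho n w) (HApow w (taft_rho n w) s)); first by [].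
pose G i k := taft_a w i * (taft_a w k * P w s k * w ^+ (i.+1 * k)).
pose V K := E n w K (n.-1 * (K + s.+1)) (K + s.+1).
rewrite IH rho_E HAmul_suml.
rewrite (eq_bigr (fun i : 'I_n => \sum_(k < n) G i k *: V (i + k)%N)) => [|i _]; last first.
  rewrite HAmulZl HAmul_sumr scaler_sumr; apply: eq_bigr => k _.
  rewrite HAmulZr HAmul_E // factor !scalerA /G /V .
  congr (_ *: E n w _ _ _); [ring | by rewrite -mulnDr; congr (_ * _)%N; lia | lia].
rewrite (@conv_sum F _ n G V); last by move=> K nK; rewrite /V E0.
apply: eq_bigr => K _; congr (_ *: _).
rewrite /= mulr_sumr; apply: eq_bigr => i _; rewrite /G.
have e := taft_aD w i (K - i); rewrite subnKC ?(ltnSE (ltn_ord i)) // in e.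
rewrite -e mulSn exprD; ring.
Qed.

End Main.

Theorem proposition3p6 (F : fieldType) (n : nat) (w : F)
  (charF0 : [pchar F] =i pred0) (n_gt1 : (1 < n)%N)
  (w_prim : n.-primitive_root w) (s : nat) (hs1 : (1 <= s)%N) (hs2 : (s <= n)%N) :
  HApow w (taft_rho n w) s =
  \sum_(k < n)
     (taft_a w k *
      \sum_(f : {ffun 'I_s -> 'I_k.+1} | (\sum_(j < s) (f j : nat) == k)%N)
          w ^+ (\sum_(j < s) (f j : nat) * j)%N) *:
     HAmul w (HAmul w (HApow w (HAx F n) k) (HApow w (HAginv F n) (k + s)))
             (HApow w (HAu F n) (k + s)).
Proof.
have wn : w ^+ n = 1 by exact: prim_expr_order.
rewrite rho_pow //; apply: eq_bigr => k _.
by rewrite Sf // powx // powginv // powu // term // ltnW.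
Qed.
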